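(* Let $G$ be a connected graph with domination number $\gamma(G)\ge 2$ and let $H$ be any graph. If $X$ is a $\mu_t(G\circ H)$-set, then for every vertex $u\in V(G)$, $$|(\{u\}\times V(H))\cap X|\ge n(H)-1.$$
   Context: All graphs are finite, simple and undirected; $n(G)$ denotes the order of $G$ and $\gamma(G)$ its domination number. The lexicographic product $G\circ H$ has vertex set $V(G)\times V(H)$, with $(x,y)$ adjacent to $(x',y')$ iff $xx'\in E(G)$, or $x=x'$ and $yy'\in E(H)$. Let $F$ be a connected graph and $X\subseteq V(F)$. Two vertices $x,y\in V(F)$ are $X$-visible if there exists a shortest $x,y$-path in $F$ none of whose internal vertices belongs to $X$. $X$ is a total mutual-visibility set of $F$ if every two vertices of $F$ are $X$-visible (the empty set is allowed). $\mu_t(F)$ is the maximum cardinality of a total mutual-visibility set of $F$, and a $\mu_t(F)$-set is a total mutual-visibility set of that cardinality. *)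

(* Defs.v *)
From mathcomp Require Import all_boot all_order.
Set Implicit Arguments. Unset Strict Implicit. Unset Printing Implicit Defensive.

Definition simple_graph (T : finType) (e : rel T) : Prop :=
  symmetric e /\ irreflexive e.

(* A walk from x is x :: p with consecutive vertices adjacent (path e x p);
   its length is size p and it ends at last x p. *)
Definition gconnected (T : finType) (e : rel T) : Prop :=
  forall x y : T, exists p : seq T, path e x p /\ last x p = y.

Definition shortest_path (T : finType) (e : rel T) (x y : T) (p : seq T) : Prop :=
  [/\ path e x p, last x p = y &
      forall q : seq T, path e x q -> last x q = y -> size p <= size q].

Definition internal (T : Type) (x : T) (p : seq T) : seq T := behead (belast x p).

Definition visible (T : finType) (e : rel T) (X : {set T}) (x y : T) : Prop :=
  exists p : seq T, shortest_path e x y p /\ all (fun v => v \notin X) (internal x p).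

Definition total_mutual_visibility (T : finType) (e : rel T) (X : {set T}) : Prop :=
  forall x y : T, visible e X x y.

(* A mu_t(F)-set: a total mutual-visibility set of maximum cardinality
   (mu_t(F) = #|X| for such X; the empty set is always a t.m.v. set). *)
Definition is_mu_t_set (T : finType) (e : rel T) (X : {set T}) : Prop :=
  total_mutual_visibility e X /\
  forall Y : {set T}, total_mutual_visibility e Y -> #|Y| <= #|X|.

Definition dominating (T : finType) (e : rel T) (D : {set T}) : bool :=
  [forall v, (v \in D) || [exists d in D, e d v]].

Definition domination_number (T : finType) (e : rel T) : nat :=
  \big[minn/#|T|]_(D : {set T} | dominating e D) #|D|.

Definition lex_prod (T1 T2 : finType) (e1 : rel T1) (e2 : rel T2) : rel (T1 * T2) :=
  fun a b => e1 a.1 b.1 || ((a.1 == b.1) && e2 a.2 b.2).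

(* Main.v *)
Require Import Defs.
From mathcomp Require Import all_boot all_order.
From mathcomp Require Import zify.
Set Implicit Arguments. Unset Strict Implicit.

Lemma good_internal (T : finType) (X : {set T}) (x y : T) (p : seq T) :
  last x p = y -> all (fun v => v \notin X) (internal x p) ->
  forall v, v \in p -> v != y -> v \notin X.
Proof.
case/lastP: p => [|q z]; first by move=> _ _ v.
rewrite last_rcons => <-; rewrite /internal belast_rcons /= => /allP H v.
rewrite mem_rcons inE => /orP[/eqP->|Hv]; first by rewrite eqxx.
by move=> _; apply: H.
Qed.

Lemma vis_to (T : finType) (e : rel T) (X : {set T}) (x y : T) :
  visible e X x y -> exists p, [/\ shortest_path e x y p, uniq (x :: p) &
     forall v, v \in p -> v != y -> v \notin X].
Proof.
case=> p [[Hp Hl Hmin] Hall].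
have G := good_internal Hl Hall.
case: (shortenP Hp) Hl => p' Hp' Hu Hsub Hl'.
exists p'; split => //.
- split => // q Hq Hlq; apply: leq_trans (Hmin q Hq Hlq).
  by apply: uniq_leq_size => //; case/andP: Hu.
- by move=> v Hv Hvy; apply: G => //; apply: Hsub.
Qed.

Lemma vis_of (T : finType) (e : rel T) (X : {set T}) (x y : T) p :
  shortest_path e x y p -> (forall v, v \in p -> v != y -> v \notin X) ->
  visible e X x y.
Proof.
case=> Hp Hl Hmin G.
case: (shortenP Hp) Hl => p' Hp' Hu Hsub Hl'.
exists p'; split.
- split => // q Hq Hlq; apply: leq_trans (Hmin q Hq Hlq).
  by apply: uniq_leq_size => //; case/andP: Hu.
- apply/allP => v; move: Hu Hl' Hsub; case/lastP: p' {Hp'} => [|q z] //.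
  rewrite last_rcons /internal belast_rcons /= => Hu Hz Hsub Hv.
  apply: G; first by apply: Hsub; rewrite mem_rcons inE Hv orbT.
  move: Hu => /andP[_]; rewrite rcons_uniq => /andP[Hzn _].
  by rewrite -Hz; apply: contraNneq Hzn => <-.
Qed.

Lemma shortcut (T : finType) (e : rel T) x y l m m' r :
  shortest_path e x y (l ++ m ++ r) -> path e (last x l) (m' ++ r) ->
  last (last x l) (m' ++ r) = last (last x l) (m ++ r) -> size m <= size m'.
Proof.
case=> Hp Hl Hmin Hp' Hl'.
have := Hmin (l ++ m' ++ r).
move: Hp; rewrite cat_path => /andP[Hp1 _].
rewrite cat_path Hp1 Hp' last_cat Hl' -last_cat Hl.
by rewrite !size_cat leq_add2l leq_add2r => H; apply: H.
Qed.

Lemma find_dist2 (T : finType) (e : rel T) u : forall q s,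
  (s == u) || e u s -> path e s q -> ~~ ((last s q == u) || e u (last s q)) ->
  exists s' t, [/\ (s' == u) || e u s', e s' t & ~~ ((t == u) || e u t)].
Proof.
elim=> [|t q IH] s Hs /=; first by move=> _; rewrite Hs.
move=> /andP[Hst Hp] Hl.
case Ht: ((t == u) || e u t); first exact: IH Ht Hp Hl.
by exists s, t; rewrite Ht.
Qed.

Lemma bigmin_le (I : eqType) (r : seq I) (P : pred I) (F : I -> nat) k j :
  j \in r -> P j -> \big[minn/k]_(i <- r | P i) F i <= F j.
Proof.
elim: r => //= a r IH; rewrite inE big_cons => /orP[/eqP<-|Hj] Pj.
  by rewrite Pj geq_minl.
case: (P a); last exact: IH.
exact: leq_trans (geq_minr _ _) (IH Hj Pj).
Qed.

Lemma Hnb (T1 T2 : finType) (e1 : rel T1) (e2 : rel T2)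
  (hG : simple_graph e1) (hconn : gconnected e1) (hgamma : 2 <= domination_number e1)
  (X : {set T1 * T2}) (Htmv : total_mutual_visibility (lex_prod e1 e2) X) u (h0 : T2) :
  exists z : T1 * T2, e1 u z.1 /\ z \notin X.
Proof.
case: hG => Hsym Hirr.
have Hnd : ~~ dominating e1 [set u].
  apply/negP => Hd; move: hgamma.
  rewrite /domination_number => H.
  have := leq_trans H (bigmin_le _ _ (mem_index_enum [set u]) Hd).
  by rewrite cards1.
move/forallPn: Hnd => [v]; rewrite negb_or => /andP[Hv Hne].
have Huv : ~~ e1 u v.
  apply/negP => H; apply/(negP Hne)/existsP; exists u; by rewrite inE eqxx H.
case: (hconn u v) => q [Hq Hlq].
have [s [t [Hs Hst Ht]]] : exists s' t, [/\ (s' == u) || e1 u s', e1 s' t & ~~ ((t == u) || e1 u t)].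
  apply: (find_dist2 (q := q) (s := u)) => //; first by rewrite eqxx.
  by rewrite Hlq negb_or Huv andbT; move: Hv; rewrite inE.
move: Ht; rewrite negb_or => /andP[Htu Hut].
have Hsu : e1 u s.
  case/orP: Hs => // /eqP Hsu; subst s; by rewrite Hst in Hut.
case: (vis_to (Htmv (u, h0) (t, h0))) => p [[Hp Hl Hmin] Hu G].
have := Hmin [:: (s, h0); (t, h0)].
rewrite /= /lex_prod /= Hsu Hst => /(_ isT erefl) Hsz; clear Hmin.
move: Hsz; case: p Hp Hl Hu G => [|m [|m2 [|m3 p]]] //=.
- by move=> _ [] Eut; rewrite Eut eqxx in Htu.
- move=> Hm Hl2; subst m; move: Hm; rewrite /lex_prod /= (negbTE Hut) /=.
  by move=> /andP[/andP[/eqP Eut _] _]; rewrite Eut eqxx in Htu.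
- move=> /andP[Hm /andP[Hm2 _]] Hl2 Hu G _; subst m2.
  exists m; split.
  + move: Hm Hm2; rewrite /lex_prod /= => /orP[//|/andP[/eqP Hmu _]].
    by rewrite -Hmu (negbTE Hut) eq_sym (negbTE Htu).
  + apply: G; first by rewrite inE eqxx.
    by move: Hu; rewrite !inE => /and3P[].
Qed.

Lemma add_ok (T1 T2 : finType) (e1 : rel T1) (e2 : rel T2)
  (hG : simple_graph e1) (X : {set T1 * T2})
  (Htmv : total_mutual_visibility (lex_prod e1 e2) X) (u : T1) (h1 h2 : T2)
  (Hc : (u, h1) \notin X) (Hc' : (u, h2) \notin X) (Hh : h1 != h2)
  (z : T1 * T2) (Hz : e1 u z.1) (HzX : z \notin X) :
  total_mutual_visibility (lex_prod e1 e2) ((u, h1) |: X).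
Proof.
case: hG => Hsym Hirr.
set E := lex_prod e1 e2; set c := (u, h1).
move=> x y.
case: (vis_to (Htmv x y)) => p [Hsp Hu G].
case Hcp: ((c \in p) && (c != y)); last first.
  apply: (vis_of Hsp) => v Hv Hvy; rewrite in_setU1 negb_or G // andbT.
  by apply/eqP => Hvc; rewrite -Hvc Hv Hvy in Hcp.
move/andP: Hcp => [Hcp Hcy].
case/splitPr: Hcp Hsp Hu G => p1 p2.
case: p2 => [|b p3] Hsp Hu G.
  by case: Hsp => _ Hl _; rewrite last_cat /= in Hl; rewrite Hl eqxx in Hcy.
set a := last x p1.
have [Hp1 Hac Hcb Hp3] : [/\ path E x p1, E a c, E c b & path E b p3].
  by case: Hsp => Hp _ _; move: Hp; rewrite cat_path /= => /and4P[].
have Hu' : uniq (p1 ++ c :: b :: p3) by case/andP: Hu.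
have [Hc1 Hc2] : c \notin p1 /\ c \notin b :: p3.
  move: Hu'; rewrite cat_uniq /= => /and4P[_ Hh' Hn _]; split => //.
  by apply: contra Hh' => Hin; rewrite Hin.
have repl : forall z', E a z' -> E z' b -> z' \notin X -> z' != c ->
    visible E (c |: X) x y.
  move=> z' Ha Hb HX Hzc.
  case: Hsp => Hp Hl Hmin.
  apply: (vis_of (p := p1 ++ z' :: b :: p3)).
    split.
    - by rewrite cat_path Hp1 /= -/a Ha Hb Hp3.
    - by rewrite -Hl !last_cat.
    - by move=> q Hq Hlq; rewrite size_cat /=; have := Hmin q Hq Hlq; rewrite size_cat.
  move=> v; rewrite mem_cat in_cons => /orP[Hv|/orP[/eqP ->|Hv]] Hvy.
  - rewrite in_setU1 negb_or G //; last by rewrite mem_cat Hv.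
    by rewrite andbT; apply: contraNneq Hc1 => <-.
  - by rewrite in_setU1 negb_or Hzc HX.
  - rewrite in_setU1 negb_or G //; last by rewrite mem_cat in_cons Hv !orbT.
    by rewrite andbT; apply: contraNneq Hc2 => <-.
have contr : E a b -> False.
  move=> Hab.
  have H := shortcut (l := p1) (m := [:: c]) (m' := [::]) (r := b :: p3).
  have H1 : path E (last x p1) ([::] ++ b :: p3) by rewrite /= Hp3 andbT.
  by have := H _ _ _ Hsp H1 erefl.
move: Hac Hcb; rewrite /E /lex_prod /= => Hac Hcb.
case Ha: (a.1 == u); case Hb: (b.1 == u).
- apply: (repl z) => //.
  + by rewrite /E /lex_prod (eqP Ha) Hz.
  + by rewrite /E /lex_prod (eqP Hb) Hsym Hz.
  + by apply/eqP => Hzc; move: Hz; rewrite Hzc /= Hirr.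
- exfalso; apply: contr; rewrite /E /lex_prod (eqP Ha).
  by move: Hcb; rewrite eq_sym Hb orbF => ->.
- exfalso; apply: contr; rewrite /E /lex_prod (eqP Hb).
  by move: Hac; rewrite Ha orbF => ->.
- apply: (repl (u, h2)) => //.
  + by rewrite /E /lex_prod /=; move: Hac; rewrite Ha orbF => ->.
  + by rewrite /E /lex_prod /=; move: Hcb; rewrite eq_sym Hb orbF => ->.
  + by apply: contraNneq Hh => -[->].
Qed.

Theorem lemma4p1 (T1 T2 : finType) (e1 : rel T1) (e2 : rel T2)
  (hG : simple_graph e1) (hH : simple_graph e2)
  (hconn : gconnected e1) (hgamma : 2 <= domination_number e1)
  (X : {set T1 * T2}) (hX : is_mu_t_set (lex_prod e1 e2) X) :
  forall u : T1, #|T2| - 1 <= #|[set v : T1 * T2 | v.1 == u] :&: X|.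
Proof.
move=> u; case: hX => Htmv Hmax.
rewrite leqNgt; apply/negP => Hlt.
pose S := [set h | (u, h) \in X].
have HS : #|S| <= #|[set v : T1 * T2 | v.1 == u] :&: X|.
  rewrite -(@card_imset _ _ (fun h => (u, h)) S); last by move=> h h' [].
  apply: subset_leq_card; apply/subsetP => v /imsetP [h Hh ->].
  by rewrite inE in Hh; rewrite !inE eqxx Hh.
have HC := cardsC S.
have : 1 < #|~: S| by lia.
case/card_gt1P => h1 [h2 [H1 H2 Hne]].
rewrite !inE in H1 H2.
case: (Hnb hG hconn hgamma Htmv u h1) => z [Hz HzX].
have := Hmax _ (add_ok hG Htmv H1 H2 Hne Hz HzX).
by rewrite cardsU1 H1 ltnn.
Qed.
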